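(* Let $r\ge 2$, let $H$ be a digraph (possibly with loops), and let $D$ be an $H$-colored $r$-transitive digraph. For every $k \geq r$, $D$ has a $(k,H)$-kernel.
   Context: All digraphs are finite. A digraph $D$ is $r$-transitive if for all distinct $u,v\in V(D)$, whenever there is a directed $uv$-path of length $r$, the arc $(u,v)$ belongs to $A(D)$. $D$ has no loops and comes with a map $\rho: A(D)\to V(H)$. For a walk $W=(x_0,\ldots,x_n)$ in $D$, there is an obstruction on $x_i$ if $(\rho(x_{i-1},x_i),\rho(x_i,x_{i+1})) \notin A(H)$; for an open walk this is considered at internal vertices $x_i$, $1\le i\le n-1$, for a closed walk at all $i\in\{0,\ldots,n-1\}$ with indices modulo $n$. $O_H(W)$ is the set of indices with an obstruction; the $H$-length is $l_H(W)=|O_H(W)|+1$ for open $W$ and $|O_H(W)|$ for closed $W$. A $(k,H)$-kernel ($k\ge2$) is a set $S\subseteq V(D)$ such that for every two distinct $u,v\in S$ every directed $uv$-path in $D$ has $H$-length at least $k$, and for every $x\in V(D)\setminus S$ there is a directed path from $x$ to a vertex of $S$ of $H$-length at most $k-1$. *)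

(* Defs.v *)
From mathcomp Require Import all_boot.
Set Implicit Arguments. Unset Strict Implicit. Unset Printing Implicit Defensive.

Section HColored.
Variables (V VH : finType) (A : rel V) (AH : rel VH) (rho : V -> V -> VH).

(* A walk/path is represented by its sequence of vertices [x_0; ...; x_n]. *)
Definition dpath (p : seq V) : bool :=
  if p is x :: q then path A x q && uniq p else false.

Definition dpath_from_to (u v : V) (p : seq V) : bool :=
  [&& dpath p, head u p == u & last u p == v].

Definition wlen (p : seq V) : nat := (size p).-1.

(* Number of obstructions at the internal vertices x_1 .. x_{n-1} of an
   open walk: x_i is an obstruction iff (rho(x_{i-1},x_i), rho(x_i,x_{i+1}))
   is not an arc of H. *)
Fixpoint nobs (p : seq V) : nat :=
  match p with
  | x :: ((y :: z :: _) as q) => (~~ AH (rho x y) (rho y z)) + nobs q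
  | _ => 0
  end.

Definition hlen (p : seq V) : nat := (nobs p).+1.

Definition r_transitive (r : nat) : Prop :=
  forall u v : V, u != v ->
    (exists p, dpath_from_to u v p && (wlen p == r)) -> A u v.

Definition kH_kernel (k : nat) (S : {set V}) : Prop :=
  (forall u v : V, u \in S -> v \in S -> u != v ->
     forall p, dpath_from_to u v p -> k <= hlen p) /\
  (forall x : V, x \notin S ->
     exists s, exists p, [&& s \in S, dpath_from_to x s p & hlen p <= k.-1]).

End HColored.

(* Main.v *)
Require Import Defs.
From mathcomp Require Import all_boot.
From mathcomp Require Import zify.

Lemma shorten_r (V : finType) (A : rel V) (r : nat) :
  2 <= r -> r_transitive A r ->
  forall n x p, size p <= n -> path A x p -> uniq (x :: p) ->
  exists q, [&& path A x q, uniq (x :: q), last x q == last x p & size q <= r.-1].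
Proof.
move=> r2 rt; elim=> [|n IH] x p Hs Hp Hu.
  by exists p; rewrite Hp Hu eqxx /=; case: p Hs {Hp Hu}.
case: (leqP (size p) r.-1) => Hsr.
  by exists p; rewrite Hp Hu eqxx Hsr.
set z := nth x p r.-1.
have Hlt : r.-1 < size p by [].
have Ep : p = take r.-1 p ++ z :: drop r p.
  have r1 : r.-1.+1 = r by rewrite (prednK (leq_trans _ r2)).
  by rewrite /z -[in drop r p]r1 -(drop_nth x Hlt) cat_take_drop.
have Hs1 : size (take r.-1 p) = r.-1 by rewrite size_take Hlt.
have Hlast : last x p = last z (drop r p) by rewrite {1}Ep last_cat.
move: (take r.-1 p) (drop r p) Ep Hs1 Hlast => p1 p2 Ep Hs1 Hlast.
rewrite Ep in Hp Hu Hs.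
have Axz : A x z.
  have xz : x != z.
    apply/eqP=> E; move: Hu; rewrite /= E mem_cat inE eqxx orbT //.
  apply: (rt x z xz); exists (x :: rcons p1 z).
  rewrite /dpath_from_to /dpath /= last_rcons eqxx /wlen /= size_rcons Hs1.
  rewrite (prednK (leq_trans _ r2)) // eqxx !andbT.
  move: Hp; rewrite cat_path rcons_path => /andP[-> /=] /andP[-> _] /=.
  rewrite eqxx andbT; change (uniq (x :: rcons p1 z)).
  apply: (subseq_uniq _ Hu); rewrite -cats1 -!cat_cons.
  by apply: cat_subseq; [exact: subseq_refl | rewrite sub1seq mem_head].
have [q /and4P[Hq1 Hq2 Hq3 Hq4]] : exists q, [&& path A x q, uniq (x :: q),
    last x q == last x (z :: p2) & size q <= r.-1].
  apply: IH.
  - move: Hs; rewrite size_cat /= Hs1; move: r2; clear; lia.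
  - rewrite /= Axz /=; move: Hp; rewrite cat_path => /andP[_] /=; by case/andP.
  - apply: (subseq_uniq _ Hu).
    have -> : x :: z :: p2 = [:: x] ++ z :: p2 by [].
    have -> : x :: p1 ++ z :: p2 = (x :: p1) ++ z :: p2 by [].
    by apply: cat_subseq; [rewrite sub1seq mem_head | exact: subseq_refl].
exists q; rewrite Hq1 Hq2 Hq4 andbT /=.
by rewrite (eqP Hq3) /= -Hlast Ep.
Qed.

Lemma nobs_le (V VH : finType) (AH : rel VH) (rho : V -> V -> VH) (p : seq V) :
  nobs AH rho p <= (size p).-2.
Proof.
elim: p => [|x q IH] //; case: q IH => [|y [|z t]] //= IH.
move: IH; case: (AH _ _) => /=; lia.
Qed.

Theorem corollary12 (VH : finType) (AH : rel VH)
  (V : finType) (A : rel V) (rho : V -> V -> VH) (r : nat) :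
  2 <= r ->
  irreflexive A ->
  r_transitive A r ->
  forall k : nat, r <= k ->
    exists S : {set V}, kH_kernel A AH rho k S.
Proof.
move=> r2 irrA rt k rk.
pose S := [set s | [forall w, connect A s w ==> (connect A w s && (enum_rank s <= enum_rank w))]].
have inS s w : s \in S -> connect A s w -> connect A w s && (enum_rank s <= enum_rank w).
  by rewrite inE => /forallP /(_ w) /implyP; apply.
exists S; split.
  move=> u v uS vS uv p /and3P[Hp Hh Hl].
  case: p Hp Hh Hl => [|x q] //= /andP[Hp _] /eqP Ex /eqP Hl; subst x.
  have cuv : connect A u v by apply/connectP; exists q.
  case/andP: (inS _ _ uS cuv) => cvu l1.
  case/andP: (inS _ _ vS cvu) => _ l2.
  have : enum_rank u = enum_rank v by apply: val_inj => /=; apply/eqP; rewrite eqn_leq l1 l2.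
  by move/enum_rank_inj => E; rewrite E eqxx in uv.
move=> x xS.
pose f z := #|[set y | connect A z y]| * #|V| + enum_rank z.
have Px : connect A x x by exact: connect0.
case: (arg_minnP f Px) => s xs smin.
have sS : s \in S.
  rewrite inE; apply/forallP => w; apply/implyP => sw.
  have xw : connect A x w := connect_trans xs sw.
  have fsw := smin w xw.
  have sub : [set y | connect A w y] \subset [set y | connect A s y].
    by apply/subsetP => y; rewrite !inE => wy; exact: connect_trans sw wy.
  have cle := subset_leq_card sub.
  have rw := ltn_ord (enum_rank w); have rs := ltn_ord (enum_rank s).
  have ceq : #|[set y | connect A w y]| = #|[set y | connect A s y]|.
    apply/eqP; rewrite eqn_leq cle /=; move: fsw; rewrite /f.
    move: rw rs cle; set a := #|[set y | connect A w y]|; set b := #|[set y | connect A s y]|.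
    set n := #|V|; move=> rw rs cle fsw; rewrite leqNgt; apply/negP => ab.
    have : a.+1 * n <= b * n by rewrite leq_mul2r ab orbT.
    move: fsw rw; clear; nia.
  have /subset_cardP E := ceq.
  have ws : s \in [set y | connect A w y] by rewrite (E sub) inE connect0.
  rewrite inE in ws; rewrite ws /=.
  by move: fsw; rewrite /f ceq leq_add2l.
have xs' : x != s by apply/eqP => E; rewrite E sS in xS.
case/connectP: xs => p0 Hp0 El.
subst s; move: sS xs'; case: (shortenP Hp0) => p1 Hp1 Hu1 _ sS xs'.
have [q /and4P[Hq1 Hq2 Hq3 Hq4]] := @shorten_r V A r r2 rt _ _ _ (leqnn _) Hp1 Hu1.
exists (last x p1), (x :: q); rewrite sS /dpath_from_to /dpath /= Hq1 /=.
rewrite -[(x \notin q) && uniq q]/(uniq (x :: q)) Hq2 eqxx /=.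
rewrite (eqP Hq3) eqxx /=.
rewrite /hlen; have := @nobs_le V VH AH rho (x :: q); move: Hq4 rk r2 => /=; lia.
Qed.
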